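(* Let $X$ and $\Lambda$ be nonempty sets, $f: X\to\mathbb{R}$, and $(f_\lambda)_{\lambda\in\Lambda}$ a family of real-valued functions on $X$ such that $(f_\lambda(x))_{\lambda\in\Lambda}\in\ell^\infty(\Lambda)$ for every $x\in X$ and the feasible set $X_0:=\{x\in X:\ \sup_{\lambda\in\Lambda}f_\lambda(x)\le0\}$ is nonempty. Assume $x^0\in X_0$ is an optimal solution, i.e. $f(x^0)=\inf_{x\in X_0}f(x)$, and that the Slater condition holds: there exists $x^1\in X$ with $\sup_{\lambda\in\Lambda}f_\lambda(x^1)<0$. Then there exists $\Phi_0\in\ell^\infty(\Lambda)^*_+$ such that $(x^0,\Phi_0)$ is a saddle point of the Lagrangian $\mathbf{L}$ if and only if the family $(f_\lambda)_{\lambda\in\Lambda}\cup(f-f(x^0))$ is infsup-convex on $X$.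
   Context: $\ell^\infty(\Lambda)$ is the Banach space of bounded real functions on $\Lambda$ (sup-norm), $\ell^\infty(\Lambda)^*_+$ the cone of positive continuous linear functionals on it ($\Phi(\varphi)\ge0$ whenever $\varphi\ge0$). The Lagrangian $\mathbf{L}: X\times\ell^\infty(\Lambda)^*_+\to\mathbb{R}$ is $\mathbf{L}(x,\Phi):=f(x)+\Phi((f_\lambda(x))_{\lambda\in\Lambda})$; $(x^0,\Phi_0)$ is a saddle point if $\mathbf{L}(x^0,\Phi)\le\mathbf{L}(x^0,\Phi_0)\le\mathbf{L}(x,\Phi_0)$ for all $(x,\Phi)\in X\times\ell^\infty(\Lambda)^*_+$. The family $(f_\lambda)_{\lambda\in\Lambda}\cup(f-f(x^0))$ is the family indexed by $\Lambda\cup\{\mu\}$ ($\mu\notin\Lambda$) whose $\mu$-th member is $f-f(x^0)$. With $\Delta_m:=\{\mathbf t\in\mathbb{R}^m: t_j\ge0,\sum t_j=1\}$, a family $(g_i)_{i\in I}$ of real functions on $X$ is infsup-convex on $X$ if for all $m\ge1$, $\mathbf{t}\in\Delta_m$, $x_1,\dots,x_m\in X$: $\inf_{x\in X}\sup_{i\in I}g_i(x)\le\sup_{i\in I}\sum_{j=1}^m t_j g_i(x_j)$. *)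

(* Defs.v *)
From HB Require Import structures.
From mathcomp Require Import all_boot all_order all_algebra.
From mathcomp Require Import all_classical all_reals all_analysis.
Set Implicit Arguments. Unset Strict Implicit. Unset Printing Implicit Defensive.
Import Order.TTheory GRing.Theory Num.Theory.
Local Open Scope classical_set_scope.
Local Open Scope ring_scope.

Section Defs.
Context {R : realType}.

Definition linfty {L : Type} (phi : L -> R) : Prop :=
  exists M : R, forall l, `|phi l| <= M.

Definition supnorm {L : Type} (phi : L -> R) : R :=
  sup [set `|phi l| | l in [set: L]].

(* positive continuous linear functionals on l^oo(L); a functional is a map
   (L -> R) -> R whose values off l^oo(L) are irrelevant *)
Definition linfty_dual_pos {L : Type} (Phi : (L -> R) -> R) : Prop :=
  (forall (a : R) (phi psi : L -> R), linfty phi -> linfty psi ->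
     Phi (fun l => a * phi l + psi l) = a * Phi phi + Phi psi) /\
  (forall phi : L -> R, linfty phi -> forall eps : R, 0 < eps ->
     exists2 delta : R, 0 < delta & forall psi : L -> R, linfty psi ->
       supnorm (fun l => psi l - phi l) < delta -> `|Phi psi - Phi phi| < eps) /\
  (forall phi : L -> R, linfty phi -> (forall l, 0 <= phi l) -> 0 <= Phi phi).

Definition lagrangian {X L : Type} (f : X -> R) (F : L -> X -> R)
  (x : X) (Phi : (L -> R) -> R) : R := f x + Phi (fun l => F l x).

Definition saddle_point {X L : Type} (f : X -> R) (F : L -> X -> R)
  (x0 : X) (Phi0 : (L -> R) -> R) : Prop :=
  forall (x : X) (Phi : (L -> R) -> R), linfty_dual_pos Phi ->
    lagrangian f F x0 Phi <= lagrangian f F x0 Phi0 /\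
    lagrangian f F x0 Phi0 <= lagrangian f F x Phi0.

Definition infsup_convex {X I : Type} (g : I -> X -> R) : Prop :=
  forall (m : nat) (t : 'I_m -> R) (xs : 'I_m -> X), (0 < m)%N ->
    (forall j, 0 <= t j) -> \sum_(j < m) t j = 1 ->
    (ereal_inf [set ereal_sup [set (g i x)%:E | i in [set: I]] | x in [set: X]]
      <= ereal_sup [set (\sum_(j < m) t j * g i (xs j))%:E | i in [set: I]])%E.

(* the family (f_l)_l U (f - f x0), indexed by option L, None = mu *)
Definition add_obj {X L : Type} (F : L -> X -> R) (f : X -> R) (x0 : X)
  : option L -> X -> R :=
  fun i x => match i with Some l => F l x | None => f x - f x0 end.

End Defs.

(* Main.v *)
Require Import Defs.
From HB Require Import structures.
From mathcomp Require Import all_boot all_order all_algebra.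
From mathcomp Require Import all_classical all_reals all_analysis.
From mathcomp Require Import ring lra.
Import Order.TTheory GRing.Theory Num.Theory.
Local Open Scope classical_set_scope.
Local Open Scope ring_scope.
Set Implicit Arguments. Unset Strict Implicit.

Section InfLemmas.
Variable R : realType.

Lemma inf_le_elt (C : set R) x : has_lbound C -> C x -> inf C <= x.
Proof. by move=> hC Cx; exact: ge_inf hC _ Cx. Qed.

Lemma inf_add_le (A B C : set R) : A !=set0 -> B !=set0 ->
  (forall a b, A a -> B b -> inf C <= a + b) -> inf C <= inf A + inf B.
Proof.
move=> hA hB H.
suff : inf C - inf A <= inf B by rewrite lerBlDl.
apply: lb_le_inf hB _ => b Bb.
rewrite lerBlDl -lerBlDr; apply: lb_le_inf hA _ => a Aa.
by rewrite lerBlDr; exact: H.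
Qed.

Lemma inf_scale_le (A C : set R) c : 0 < c -> A !=set0 ->
  (forall a, A a -> inf C <= c * a) -> inf C <= c * inf A.
Proof.
move=> c0 hA H.
rewrite -ler_pdivrMl //; apply: lb_le_inf hA _ => a Aa.
by rewrite ler_pdivrMl //; exact: H.
Qed.

End InfLemmas.

Section HBsec.
Variables (R : realType) (V : lmodType R) (B : V -> Prop).
Hypothesis B0 : B 0.
Hypothesis Bc : forall (a : R) x y, B x -> B y -> B (a *: x + y).

Lemma BD x y : B x -> B y -> B (x + y).
Proof. by move=> bx by_; have := Bc 1 bx by_; rewrite scale1r. Qed.
Lemma BZ (a : R) x : B x -> B (a *: x).
Proof. by move=> bx; have := Bc a bx B0; rewrite addr0. Qed.
Lemma BN x : B x -> B (- x).
Proof. by move=> bx; have := BZ (-1) bx; rewrite scaleN1r. Qed.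

Definition sublin (q : V -> R) :=
  [/\ q 0 <= 0,
      (forall x y, B x -> B y -> q (x + y) <= q x + q y) &
      (forall (a : R) x, 0 < a -> B x -> q (a *: x) <= a * q x)].

Lemma sublin0 q : sublin q -> q 0 = 0.
Proof.
case=> h0 hD _; apply/eqP; rewrite eq_le h0 /=.
have := hD 0 0 B0 B0; rewrite addr0 => h.
by rewrite -(lerD2l (q 0)) addr0.
Qed.

Lemma sublin_hom q : sublin q -> forall (a : R) x, 0 <= a -> B x ->
  q (a *: x) = a * q x.
Proof.
move=> hq a x; rewrite le_eqVlt => /orP[/eqP<-|a0] bx.
  by rewrite scale0r mul0r sublin0.
case: hq => _ _ hZ; apply/eqP; rewrite eq_le hZ //=.
have := hZ a^-1 (a *: x); rewrite invr_gt0 => /(_ a0 (BZ a bx)).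
rewrite scalerA mulVf ?gt_eqF // scale1r.
by rewrite -(ler_pM2l a0) mulrA mulfV ?gt_eqF // mul1r.
Qed.

Lemma sublin_N q x : sublin q -> B x -> 0 <= q x + q (- x).
Proof.
move=> hq bx; rewrite -(sublin0 hq) -{1}(subrr x).
by case: hq => _ hD _; apply: hD => //; exact: BN.
Qed.

Variable p : V -> R.
Hypothesis hp : sublin p.

Definition Zs (q : V -> R) := sublin q /\ (forall x, B x -> q x <= p x).

Lemma Zs_lb q x : Zs q -> B x -> - p (- x) <= q x.
Proof.
move=> [hq hle] bx; have := sublin_N hq bx.
have := hle _ (BN bx); lra.
Qed.

Lemma HB_dom : exists g : V -> R, (forall x, B x -> g x <= p x) /\
  (forall (a : R) x y, B x -> B y -> g (a *: x + y) = a * g x + g y).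
Proof.
pose T := {q : V -> R | Zs q}.
have Zp : Zs p by split => // x _.
pose rr (s t : T) := `[< forall x, B x -> sval t x <= sval s x >].
have [t tmax] : exists t : T, premaximal (fun x y => rr x y) t.
apply: (@ZL_preorder T (exist _ p Zp) rr).
- by move=> s; apply/asboolP.
- move=> r s t /asboolP h1 /asboolP h2; apply/asboolP => x bx.
  exact: le_trans (h2 x bx) (h1 x bx).
- move=> A Atot.
  pose M := [set q : V -> R | q = p \/ exists2 s, A s & q = sval s].
  have MZ q : M q -> Zs q by case=> [->//|[s _ ->]]; exact: svalP.
  have Mtot q1 q2 : M q1 -> M q2 ->
      (forall x, B x -> q1 x <= q2 x) \/ (forall x, B x -> q2 x <= q1 x).
    case=> [->|[s1 As1 ->]].
      by move=> /MZ [_ h]; right.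
    case=> [->|[s2 As2 ->]].
      by left; case: (svalP s1).
    by case: (Atot _ _ As1 As2) => /asboolP h; [right|left].
  pose S x := [set q x | q in M].
  have S0 x : S x !=set0 by exists (p x); exists p => //; left.
  have Slb x : B x -> has_lbound (S x).
    by move=> bx; exists (- p (- x)) => _ [q Mq <-]; exact: Zs_lb (MZ _ Mq) bx.
  pose m x := inf (S x).
  have mle q x : M q -> B x -> m x <= q x.
    by move=> Mq bx; apply: inf_le_elt (Slb _ bx) _; exists q.
  have Zm : Zs m.
    split; last by move=> x bx; apply: mle => //; left.
    split.
    + by apply: le_trans (mle p 0 _ B0) _; [left|case: hp].
    + move=> x y bx by_; apply: inf_add_le => // _ _ [q1 M1 <-] [q2 M2 <-].
      have [h|h] := Mtot _ _ M1 M2.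
      * apply: le_trans (mle _ _ M1 (BD bx by_)) _.
        have [[_ hD _] _] := MZ _ M1.
        by apply: le_trans (hD _ _ bx by_) _; rewrite lerD2l h.
      * apply: le_trans (mle _ _ M2 (BD bx by_)) _.
        have [[_ hD _] _] := MZ _ M2.
        by apply: le_trans (hD _ _ bx by_) _; rewrite lerD2r h.
    + move=> a x a0 bx; apply: inf_scale_le => // _ [q Mq <-].
      apply: le_trans (mle _ _ Mq (BZ a bx)) _.
      by have [[_ _ hZ] _] := MZ _ Mq; exact: hZ.
  exists (exist _ m Zm) => s As; apply/asboolP => x bx /=.
  by apply: mle => //; right; exists s.
have [[hq0 hqD hqZ] hqp] := svalP t.
set q := sval t in hq0 hqD hqZ hqp tmax *.
have hq : sublin q by [].
have key a : B a -> q (- a) <= - q a.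
  move=> ba.
  pose Sa x := [set q (x + c *: a) - c * q a | c in [set c : R | 0 <= c]].
  pose qa x := inf (Sa x).
  have Sa0 x : Sa x !=set0.
    by exists (q x); exists 0 => //=; rewrite scale0r addr0 mul0r subr0.
  have Salb x : B x -> has_lbound (Sa x).
    move=> bx; exists (- q (- x)) => _ [c c0 <-].
    have -> : c * q a = q (c *: a) by rewrite sublin_hom.
    have := hqD (x + c *: a) (- x) (BD bx (BZ c ba)) (BN bx).
    rewrite addrC addKr; lra.
  have qale x c : B x -> 0 <= c -> qa x <= q (x + c *: a) - c * q a.
    by move=> bx c0; apply: inf_le_elt (Salb _ bx) _; exists c.
  have qaq x : B x -> qa x <= q x.
    by move=> bx; apply: le_trans (qale x 0 bx (lexx _)) _;
       rewrite scale0r addr0 mul0r subr0.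
  have Zqa : Zs qa.
    split; last by move=> x bx; apply: le_trans (qaq _ bx) (hqp _ bx).
    split.
    + by apply: le_trans (qaq _ B0) _.
    + move=> x y bx by_; apply: inf_add_le => // _ _ [c c0 <-] [d d0 <-].
      apply: le_trans (qale _ (c + d) (BD bx by_) (addr_ge0 c0 d0)) _.
      have -> : x + y + (c + d) *: a = (x + c *: a) + (y + d *: a).
        by rewrite scalerDl addrACA.
      have : q ((x + c *: a) + (y + d *: a)) <= q (x + c *: a) + q (y + d *: a).
        by apply: hqD; apply: BD => //; exact: BZ.
      lra.
    + move=> b x b0 bx; apply: inf_scale_le => // _ [c c0 <-].
      apply: le_trans (qale _ (b * c) (BZ b bx) (mulr_ge0 (ltW b0) c0)) _.
      rewrite -scalerA -scalerDr.
      have : q (b *: (x + c *: a)) <= b * q (x + c *: a).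
        by apply: hqZ => //; apply: BD => //; exact: BZ.
      lra.
  have : rr t (exist _ qa Zqa) by apply/asboolP => x bx /=; exact: qaq.
  move=> /tmax /asboolP /(_ (- a) (BN ba)) /= h.
  apply: le_trans h _; apply: le_trans (qale _ 1 (BN ba) ler01) _.
  by rewrite scale1r addNr (sublin0 hq) mul1r sub0r.
have qN a : B a -> q (- a) = - q a.
  move=> ba; apply/eqP; rewrite eq_le key //=.
  by have := sublin_N hq ba; rewrite -lerBlDl sub0r.
have qD x y : B x -> B y -> q (x + y) = q x + q y.
  move=> bx by_; apply/eqP; rewrite eq_le hqD //=.
  have := hqD (x + y) (- y) (BD bx by_) (BN by_).
  by rewrite addrK qN // lerBrDr.
have qZ (a : R) x : B x -> q (a *: x) = a * q x.
  move=> bx; have [a0|a0] := leP 0 a; first by rewrite sublin_hom.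
  have -> : a *: x = - ((- a) *: x) by rewrite scaleNr opprK.
  by rewrite qN ?sublin_hom ?oppr_ge0 ?(ltW a0) // ?mulNr ?opprK //; exact: BZ.
exists q; split => // a x y bx by_.
by rewrite qD ?qZ //; exact: BZ.
Qed.

End HBsec.
Section Func.
Variables (R : realType) (L : Type).

Definition linP (Phi : (L -> R) -> R) := forall (a : R) (phi psi : L -> R),
  linfty phi -> linfty psi ->
  Phi (fun l => a * phi l + psi l) = a * Phi phi + Phi psi.
Definition posP (Phi : (L -> R) -> R) := forall phi : L -> R, linfty phi ->
  (forall l, 0 <= phi l) -> 0 <= Phi phi.

Lemma linfty_lin (a : R) (phi psi : L -> R) : linfty phi -> linfty psi ->
  linfty (fun l => a * phi l + psi l).
Proof.
move=> [M hM] [N hN]; exists (`|a| * M + N) => l.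
apply: le_trans (ler_normD _ _) _; rewrite normrM.
by apply: lerD => //; apply: ler_wpM2l.
Qed.

Lemma linfty_cst (c : R) : linfty (fun _ : L => c).
Proof. by exists `|c|. Qed.

Lemma linfty_sub (phi psi : L -> R) : linfty phi -> linfty psi ->
  linfty (fun l => phi l - psi l).
Proof.
move=> h1 h2; have := linfty_lin (-1) h2 h1.
by congr linfty; apply: funext => l; rewrite mulN1r addrC.
Qed.

Variable Phi : (L -> R) -> R.
Hypothesis hl : linP Phi.

Lemma Phi_0 : Phi (fun _ => 0) = 0.
Proof.
have := hl 1 (linfty_cst 0) (linfty_cst 0).
have -> : (fun _ : L => 1 * 0 + 0) = (fun _ => 0 : R).
  by apply: funext => l; rewrite mul1r addr0.
lra.
Qed.

Lemma Phi_scale (a : R) phi : linfty phi -> Phi (fun l => a * phi l) = a * Phi phi.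
Proof.
move=> h; have := hl a h (linfty_cst 0); rewrite Phi_0 addr0 => <-.
by congr Phi; apply: funext => l; rewrite addr0.
Qed.

Lemma Phi_add phi psi : linfty phi -> linfty psi ->
  Phi (fun l => phi l + psi l) = Phi phi + Phi psi.
Proof.
move=> h1 h2; have := hl 1 h1 h2; rewrite mul1r => <-.
by congr Phi; apply: funext => l; rewrite mul1r.
Qed.

Lemma Phi_sub phi psi : linfty phi -> linfty psi ->
  Phi (fun l => phi l - psi l) = Phi phi - Phi psi.
Proof.
move=> h1 h2; have := hl (-1) h2 h1; rewrite mulN1r addrC => <-.
by congr Phi; apply: funext => l; rewrite mulN1r addrC.
Qed.

Lemma linfty_sum (I : Type) (r : seq I) (t : I -> R) (h : I -> L -> R) :
  (forall j, linfty (h j)) -> linfty (fun l => \sum_(j <- r) t j * h j l).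
Proof.
move=> hh; elim: r => [|j r IH].
  by have := linfty_cst 0; congr linfty; apply: funext => l; rewrite big_nil.
have := linfty_lin (t j) (hh j) IH; congr linfty; apply: funext => l.
by rewrite big_cons.
Qed.

Lemma Phi_sum (I : Type) (r : seq I) (t : I -> R) (h : I -> L -> R) :
  (forall j, linfty (h j)) ->
  Phi (fun l => \sum_(j <- r) t j * h j l) = \sum_(j <- r) t j * Phi (h j).
Proof.
move=> hh; elim: r => [|j r IH].
  rewrite big_nil; transitivity (Phi (fun _ => 0)); last exact: Phi_0.
  by congr Phi; apply: funext => l; rewrite big_nil.
rewrite big_cons -IH -hl //; last exact: linfty_sum.
by congr Phi; apply: funext => l; rewrite big_cons.
Qed.

Hypothesis hp : posP Phi.

Lemma Phi_le phi psi : linfty phi -> linfty psi -> (forall l, phi l <= psi l) ->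
  Phi phi <= Phi psi.
Proof.
move=> h1 h2 h; rewrite -subr_ge0 -Phi_sub //; apply: hp; first exact: linfty_sub.
by move=> l; rewrite subr_ge0.
Qed.

Lemma pos_cont phi : linfty phi -> forall eps : R, 0 < eps ->
  exists2 delta : R, 0 < delta & forall psi : L -> R, linfty psi ->
    supnorm (fun l => psi l - phi l) < delta -> `|Phi psi - Phi phi| < eps.
Proof.
move=> hphi eps e0.
set k := Phi (fun _ => 1).
have k0 : 0 <= k by apply: hp => //; exact: linfty_cst.
exists (eps / (k + 1)); first by apply: divr_gt0 => //; lra.
move=> psi hpsi hs.
set d := fun l => psi l - phi l.
have hd : linfty d by exact: linfty_sub.
set s := supnorm d in hs.
have hds l : `|d l| <= s.
  apply: ub_le_sup; last by exists l.
  by case: hd => M hM; exists M => _ [l' _ <-].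
have -> : Phi psi - Phi phi = Phi d by rewrite Phi_sub.
have hc (c : R) : Phi (fun _ => c) = c * k.
  rewrite /k -Phi_scale; last exact: linfty_cst.
  by congr Phi; apply: funext => l; rewrite mulr1.
have h1 : Phi d <= s * k.
  rewrite -hc; apply: Phi_le => //; first exact: linfty_cst.
  by move=> l; apply: le_trans (hds l); exact: ler_norm.
have h2 : - Phi d <= s * k.
  rewrite -mulN1r -Phi_scale // -hc; apply: Phi_le => //.
  - by have := linfty_lin (-1) hd (linfty_cst 0); congr linfty; apply: funext => l; rewrite addr0.
  - exact: linfty_cst.
  by move=> l; rewrite mulN1r; apply: le_trans (hds l); rewrite -normrN ler_norm.
have h3 : s * k <= eps / (k + 1) * k by apply: ler_wpM2r => //; exact: ltW.
have h4 : eps / (k + 1) * k < eps.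
  rewrite mulrAC ltr_pdivrMr; last lra.
  by rewrite ltr_pM2l //; lra.
by rewrite ltr_norml; apply/andP; split; lra.
Qed.

End Func.

Lemma fSA (R : realType) (T : Type) (a : R) (x y : T -> R) i :
  (a *: x + y) i = a * x i + y i.
Proof. by []. Qed.
Lemma fN (R : realType) (T : Type) (x : T -> R) i : (- x) i = - x i.
Proof. by []. Qed.
Lemma fD (R : realType) (T : Type) (x y : T -> R) i : (x + y) i = x i + y i.
Proof. by []. Qed.
Lemma fZ (R : realType) (T : Type) (a : R) (x : T -> R) i : (a *: x) i = a * x i.
Proof. by []. Qed.
Lemma f0 (R : realType) (T : Type) (i : T) : (0 : T -> R) i = 0.
Proof. by []. Qed.

Section Main.
Variables (R : realType) (X L : Type) (xi : X) (li : L) (f : X -> R)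
  (F : L -> X -> R).
Hypothesis hbd : forall x : X, linfty (fun l => F l x).
Variable x0 : X.
Hypothesis hfeas : (ereal_sup [set (F l x0)%:E | l in [set: L]] <= 0)%E.
Hypothesis hopt : (f x0)%:E = ereal_inf [set (f x)%:E | x in
            [set x : X | (ereal_sup [set (F l x)%:E | l in [set: L]] <= 0)%E]].
Hypothesis hslater : exists x1 : X,
  (ereal_sup [set (F l x1)%:E | l in [set: L]] < 0)%E.

Local Notation G := (add_obj F f x0).
Local Notation gsup x := (ereal_sup [set (G i x)%:E | i in [set: option L]]).

Lemma feas_le x : (ereal_sup [set (F l x)%:E | l in [set: L]] <= 0)%E ->
  f x0 <= f x.
Proof. by move=> hx; rewrite -lee_fin hopt; apply: ereal_inf_lbound; exists x. Qed.

Lemma F_x0_le0 l : F l x0 <= 0.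
Proof.
rewrite -lee_fin; apply: le_trans hfeas.
by apply: ereal_sup_ubound; exists l.
Qed.

Lemma gsup_ge0 x : (0 <= gsup x)%E.
Proof.
rewrite leNgt; apply/negP => h.
have hF : (ereal_sup [set (F l x)%:E | l in [set: L]] <= 0)%E.
  apply: le_trans (ltW h); apply: ereal_sup_le => _ [l _ <-].
  by exists (Some l).
have := feas_le hF.
have : ((G None x)%:E <= gsup x)%E by apply: ereal_sup_ubound; exists None.
move=> /le_lt_trans /(_ h); rewrite lte_fin /=; lra.
Qed.

Lemma LHS_ge0 : (0 <= ereal_inf [set gsup x | x in [set: X]])%E.
Proof. by apply: le_ereal_inf_tmp => _ [x _ <-]; exact: gsup_ge0. Qed.

Lemma LHS_le0 : (ereal_inf [set gsup x | x in [set: X]] <= 0)%E.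
Proof.
apply: le_trans (_ : (gsup x0 <= 0)%E).
  by apply: ereal_inf_lbound; exists x0.
apply: ge_ereal_sup => _ [[l|] _ <-] /=.
  by rewrite lee_fin F_x0_le0.
by rewrite subrr.
Qed.

Lemma zero_dual : linfty_dual_pos (fun _ : L -> R => 0 : R).
Proof.
split; first by move=> *; rewrite mulr0 addr0.
split; last by [].
by move=> phi _ eps e0; exists 1 => // psi _ _; rewrite subrr normr0.
Qed.

Lemma dir1 Phi0 : linfty_dual_pos Phi0 -> saddle_point f F x0 Phi0 ->
  infsup_convex G.
Proof.
move=> hdp hs; have [hl [_ hp]] := hdp.
move=> m t xs m0 t0 t1.
apply: le_trans LHS_le0 _.
rewrite leNgt; apply/negP => hneg.
have hS i : \sum_(j < m) t j * G i (xs j) < 0.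
  rewrite -lte_fin; apply: le_lt_trans hneg.
  by apply: ereal_sup_ubound; exists i.
set h := fun l => \sum_(j < m) t j * F l (xs j).
have hh : linfty h by apply: linfty_sum.
have hPh : Phi0 h <= 0.
  rewrite -(Phi_0 hl); apply: Phi_le => //; first exact: linfty_cst.
  by move=> l; apply: ltW; exact: (hS (Some l)).
have hsum : Phi0 h = \sum_(j < m) t j * Phi0 (fun l => F l (xs j)).
  by rewrite /h (Phi_sum hl) //.
have hx0 : 0 <= Phi0 (fun l => F l x0).
  have [+ _] := hs x0 _ zero_dual; rewrite /lagrangian; lra.
have hj j : f x0 <= f (xs j) + Phi0 (fun l => F l (xs j)).
  have [_ +] := hs (xs j) _ hdp; rewrite /lagrangian; lra.
have hsum2 : \sum_(j < m) t j * f x0 <=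
    \sum_(j < m) t j * (f (xs j) + Phi0 (fun l => F l (xs j))).
  by apply: ler_sum => j _; apply: ler_wpM2l.
rewrite -mulr_suml t1 mul1r in hsum2.
rewrite (eq_bigr (fun j => t j * f (xs j) + t j * Phi0 (fun l => F l (xs j))))
  in hsum2; last by move=> j _; rewrite mulrDr.
rewrite big_split /= -hsum in hsum2.
have hN : \sum_(j < m) t j * (f (xs j) - f x0) < 0 := hS None.
rewrite (eq_bigr (fun j => t j * f (xs j) - t j * f x0)) in hN;
  last by move=> j _; rewrite mulrBr.
rewrite big_split /= sumrN -mulr_suml t1 mul1r in hN.
lra.
Qed.


Section Dir2.
Hypothesis hic : infsup_convex G.

Definition comb (s : seq (R * X)) : option L -> R :=
  fun i => \sum_(pr <- s) pr.1 * G i pr.2.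
Definition nonneg (s : seq (R * X)) := all (fun pr : R * X => 0 <= pr.1) s.

Lemma comb_nil i : comb [::] i = 0.
Proof. by rewrite /comb big_nil. Qed.

Lemma tot_prop s : nonneg s -> 0 <= \sum_(pr <- s) pr.1 /\
  (\sum_(pr <- s) pr.1 = 0 -> forall i, comb s i = 0).
Proof.
elim: s => [|pr s IH]; first by rewrite big_nil; split=> // _ i; exact: comb_nil.
rewrite /nonneg /= => /andP[h1 h2]; have [IH1 IH2] := IH h2.
rewrite big_cons; split; first exact: addr_ge0.
move=> h0 i; have e1 : pr.1 = 0 by lra.
have e2 : \sum_(pr <- s) pr.1 = 0 by lra.
by rewrite /comb big_cons -/(comb s i) IH2 // e1 mul0r addr0.
Qed.

Lemma comb_pos s e : nonneg s -> 0 < e -> ~ (forall i, comb s i <= - e).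
Proof.
move=> hs e0 hall.
have [T0 T0z] := tot_prop hs.
set T := \sum_(pr <- s) pr.1 in T0 T0z.
have [Tz|Tp] := eqVneq T 0.
  by have := hall None; rewrite T0z //; lra.
have Tpos : 0 < T by rewrite lt_def Tp.
pose d := (0 : R, xi).
have sz : (0 < size s)%N.
  by move: Tp; rewrite /T; case: (s) => //; rewrite big_nil eqxx.
have hcomb i : \sum_(j < size s) (nth d s j).1 / T * G i (nth d s j).2 = comb s i / T.
  rewrite /comb (big_nth d) big_mkord mulr_suml; apply: eq_bigr => j _.
  by rewrite mulrAC.
have hnth := (all_nthP d hs).
have H1 : forall j : 'I_(size s), 0 <= (nth d s j).1 / T.
  by move=> j; apply: divr_ge0 => //; exact: hnth.
have H2 : \sum_(j < size s) (nth d s j).1 / T = 1.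
  rewrite -mulr_suml.
  have -> : \sum_(j < size s) (nth d s j).1 = T by rewrite /T (big_nth d) big_mkord.
  exact: mulfV.
have := (hic : forall (m : nat) (t : 'I_m -> R) (xs : 'I_m -> X), (0 < m)%N ->
    (forall j, 0 <= t j) -> \sum_(j < m) t j = 1 ->
    (ereal_inf [set ereal_sup [set (G i x)%:E | i in [set: option L]] | x in [set: X]]
      <= ereal_sup [set (\sum_(j < m) t j * G i (xs j))%:E | i in [set: option L]])%E)
  (size s) (fun j : 'I_(size s) => (nth d s j).1 / T)
  (fun j : 'I_(size s) => (nth d s j).2) sz.
move=> /(_ H1 H2).
move=> /(le_trans LHS_ge0).
apply/negP; rewrite -ltNge.
apply: (@le_lt_trans _ _ (- e / T)%:E); last by rewrite lte_fin pmulr_llt0 ?invr_gt0 //; lra.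
apply: ge_ereal_sup => _ [i _ <-]; rewrite lee_fin hcomb.
by rewrite ler_pM2r ?invr_gt0.
Qed.

End Dir2.

Lemma linfty_V (a : R) (T : Type) (x y : T -> R) : linfty x -> linfty y ->
  linfty (a *: x + y).
Proof. by move=> hx hy; have := linfty_lin a hx hy; congr linfty. Qed.

Definition extL (phi : L -> R) : option L -> R :=
  fun i => if i is Some l then phi l else 0.
Definition dl : option L -> R := fun i => if i is None then 1 else 0.

Lemma linfty_extL phi : linfty phi -> linfty (extL phi).
Proof.
case=> M hM; exists M => -[l|] //=.
by rewrite normr0; apply: le_trans (hM li).
Qed.

Lemma linfty_dl : linfty dl.
Proof. by exists 1 => -[l|] /=; rewrite ?normr0 ?normr1. Qed.

Lemma hextL (a : R) phi psi :
  extL (fun l => a * phi l + psi l) = a *: extL phi + extL psi.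
Proof.
by apply: funext => -[l|]; rewrite fSA /extL //= mulr0 addr0.
Qed.

Lemma hbdG x : linfty (fun i => G i x).
Proof.
case: (hbd x) => M hM; exists (M + `|f x - f x0|) => -[l|] /=.
  by apply: le_trans (hM l) _; rewrite lerDl.
by rewrite lerDr; apply: le_trans (hM li).
Qed.

Lemma hdec x : (fun i => G i x) = (f x - f x0) *: dl + extL (fun l => F l x).
Proof.
by apply: funext => -[l|]; rewrite fSA /dl /extL /= ?mulr0 ?add0r ?mulr1 ?addr0.
Qed.

Lemma hone : (fun _ : option L => 1 : R) = 1 *: dl + extL (fun _ => 1).
Proof.
by apply: funext => -[l|]; rewrite fSA /dl /extL /= ?mulr0 ?add0r ?mulr1 ?addr0.
Qed.

Lemma B0V : linfty (0 : option L -> R).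
Proof. by exists 0 => i; rewrite f0 normr0. Qed.

Lemma BNV (x : option L -> R) : linfty x -> linfty (- x).
Proof. by move=> hx; have := linfty_V (-1) hx B0V; rewrite scaleN1r addr0. Qed.

Section Dir2b.
Hypothesis hic : infsup_convex G.

Definition Pset (phi : option L -> R) :=
  [set r : R | exists2 s, nonneg s & forall i, phi i + comb s i <= r].
Definition pp (phi : option L -> R) := inf (Pset phi).

Lemma Pset_ne phi : linfty phi -> Pset phi !=set0.
Proof.
case=> M hM; exists M; exists [::] => // i; rewrite comb_nil addr0.
exact: le_trans (ler_norm _) (hM i).
Qed.

Lemma Pset_lb phi : linfty phi -> has_lbound (Pset phi).
Proof.
case=> M hM; exists (- M) => r [s hs hr]; rewrite leNgt; apply/negP => hlt.
apply: (comb_pos hic (e := - M - r) hs); first lra.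
by move=> i; have := hr i; have := hM i; rewrite ler_norml => /andP[h1 h2]; lra.
Qed.

Lemma pp_le phi r s : linfty phi -> nonneg s ->
  (forall i, phi i + comb s i <= r) -> pp phi <= r.
Proof. by move=> hphi hs h; apply: inf_le_elt (Pset_lb hphi) _; exists s. Qed.

Lemma comb_cat s1 s2 i : comb (s1 ++ s2) i = comb s1 i + comb s2 i.
Proof. by rewrite /comb big_cat. Qed.

Lemma comb_map (a : R) s i :
  comb (map (fun pr : R * X => (a * pr.1, pr.2)) s) i = a * comb s i.
Proof. by rewrite /comb big_map mulr_sumr; apply: eq_bigr => pr _; rewrite mulrA. Qed.

Lemma pp_sublin : sublin (fun phi : option L -> R => linfty phi) pp.
Proof.
split.
- apply: (pp_le (s := [::])) => // [|i]; first exact: B0V.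
  by rewrite comb_nil f0 addr0.
- move=> x y hx hy; apply: (inf_add_le (Pset_ne hx) (Pset_ne hy)).
  move=> r1 r2 [s1 hs1 h1] [s2 hs2 h2].
  apply: (pp_le (s := s1 ++ s2)).
  + by have := linfty_V 1 hx hy; rewrite scale1r.
  + by rewrite /nonneg all_cat; apply/andP.
  + by move=> i; rewrite fD comb_cat; have := h1 i; have := h2 i; lra.
- move=> a x a0 hx; apply: (inf_scale_le a0 (Pset_ne hx)) => r [s hs h].
  apply: (pp_le (s := map (fun pr : R * X => (a * pr.1, pr.2)) s)).
  + by have := linfty_V a hx B0V; rewrite addr0.
  + rewrite /nonneg all_map; apply: sub_all hs => pr /= hp.
    exact: mulr_ge0 (ltW a0) hp.
  + by move=> i; rewrite fZ comb_map -mulrDr ler_pM2l.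
Qed.

Lemma dir2 : exists Phi0, linfty_dual_pos Phi0 /\ saddle_point f F x0 Phi0.
Proof.
have [Lam [hLp hLl]] := HB_dom B0V (fun a x y => @linfty_V a (option L) x y) pp_sublin.
have hL0 : Lam 0 = 0.
  by have := hLl 1 0 0 B0V B0V; rewrite scale1r addr0; lra.
have hLN x : linfty x -> Lam (- x) = - Lam x.
  by move=> hx; have := hLl (-1) x 0 hx B0V; rewrite scaleN1r addr0 hL0; lra.
have hLcst x r : linfty x -> (forall i, x i <= r) -> Lam x <= r.
  move=> hx h; apply: le_trans (hLp x hx) _.
  by apply: (pp_le (s := [::])) => // i; rewrite comb_nil addr0.
have hLpos x : linfty x -> (forall i, 0 <= x i) -> 0 <= Lam x.
  move=> hx h; have := hLcst (- x) 0 (BNV hx).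
  rewrite hLN //; move=> H; suff : - Lam x <= 0 by lra.
  by apply: H => i; rewrite fN oppr_le0.
have hGx x : 0 <= Lam (fun i => G i x).
  have hg := hbdG x.
  have : pp (- (fun i => G i x)) <= 0.
    apply: (pp_le (s := [:: (1, x)])); first exact: BNV.
      by rewrite /nonneg /= ler01.
    by move=> i; rewrite fN /comb big_cons big_nil /= mul1r addr0 addNr.
  have := hLp _ (BNV hg); rewrite hLN //; lra.
set c := Lam dl.
have hc0 : 0 <= c by apply: hLpos; [exact: linfty_dl | case].
have hLG x : Lam (fun i => G i x) = (f x - f x0) * c + Lam (extL (fun l => F l x)).
  by rewrite hdec hLl //; [exact: linfty_dl | exact: linfty_extL].
have hLone : 1 <= Lam (fun _ => 1).
  have := hLcst (- (fun _ => 1)) (-1) (BNV (linfty_cst _ 1)).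
  by rewrite hLN; [move=> H; have := H (fun i => lexx _); lra | exact: linfty_cst].
have cpos : 0 < c.
  case: hslater => x1 hx1.
  have [r [r0 hr]] : exists r, r < 0 /\ forall l, F l x1 <= r.
    move: hx1; set S := ereal_sup _; case E : S => [r| |] //.
      rewrite lte_fin => r0; exists r; split => // l.
      by rewrite -lee_fin -E; apply: ereal_sup_ubound; exists l.
    move=> _; have : ((F li x1)%:E <= S)%E by apply: ereal_sup_ubound; exists li.
    by rewrite E.
  rewrite lt_def hc0 andbT; apply/eqP => c0.
  have h1 := hGx x1; rewrite hLG c0 mulr0 add0r in h1.
  have h2 : 1 <= Lam (extL (fun _ => 1)).
    have e : Lam (fun _ => 1) = 1 * c + Lam (extL (fun _ => 1)).
      rewrite hone hLl //; first exact: linfty_dl.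
      by apply: linfty_extL; exact: linfty_cst.
    by move: hLone; rewrite e c0; lra.
  have h3 : Lam (extL (fun l => F l x1)) <= r * Lam (extL (fun _ => 1)).
    have he1 := linfty_extL (hbd x1).
    have he2 := linfty_extL (linfty_cst L 1).
    have := hLpos ((-1) *: extL (fun l => F l x1) + r *: extL (fun _ => 1)).
    rewrite hLl //; last by have := linfty_V r he2 B0V; rewrite addr0.
    have -> : Lam (r *: extL (fun _ => 1)) = r * Lam (extL (fun _ => 1)).
      by have := hLl r _ 0 he2 B0V; rewrite addr0 hL0 addr0.
    move=> H; suff : 0 <= -1 * Lam (extL (fun l => F l x1)) + r * Lam (extL (fun _ => 1)) by lra.
    apply: H; first by apply: linfty_V => //; have := linfty_V r he2 B0V; rewrite addr0.
    move=> -[l|]; rewrite fD !fZ /extL /=; last by rewrite !mulr0 addr0.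
    by have := hr l; lra.
  nra.
pose Phi0 := fun phi : L -> R => Lam (extL phi) / c.
have hl0 : linP Phi0.
  move=> a phi psi h1 h2; rewrite /Phi0 hextL hLl; last exact: linfty_extL.
    by rewrite mulrDl mulrA.
  exact: linfty_extL.
have hp0 : posP Phi0.
  move=> phi hphi hpos; apply: divr_ge0; last exact: ltW.
  by apply: hLpos; [exact: linfty_extL | case => //=].
have hdp : linfty_dual_pos Phi0.
  by split => //; split => //; exact: pos_cont.
have hsad x : f x0 <= f x + Phi0 (fun l => F l x).
  have := hGx x; rewrite hLG => H.
  have : 0 <= ((f x - f x0) * c + Lam (extL (fun l => F l x))) / c.
    by apply: divr_ge0 => //; exact: ltW.
  rewrite mulrDl mulfK ?gt_eqF // /Phi0; lra.
have hneg Phi : linfty_dual_pos Phi -> Phi (fun l => F l x0) <= 0.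
  case=> hl [_ hp]; rewrite -(Phi_0 hl); apply: Phi_le => //.
  - exact: linfty_cst.
  - exact: F_x0_le0.
exists Phi0; split => // x Phi hPhi; rewrite /lagrangian.
have := hneg _ hPhi; have := hneg _ hdp; have := hsad x; have := hsad x0.
by split; lra.
Qed.

End Dir2b.
End Main.

Unset Implicit Arguments. Set Strict Implicit.

Theorem theorem4p2 (R : realType) (X L : Type) (xi : X) (li : L)
  (f : X -> R) (F : L -> X -> R)
  (hbd : forall x : X, linfty (fun l => F l x))
  (x0 : X)
  (hfeas : (ereal_sup [set (F l x0)%:E | l in [set: L]] <= 0)%E)
  (hopt : (f x0)%:E = ereal_inf [set (f x)%:E | x in
            [set x : X | (ereal_sup [set (F l x)%:E | l in [set: L]] <= 0)%E]])
  (hslater : exists x1 : X, (ereal_sup [set (F l x1)%:E | l in [set: L]] < 0)%E) :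
  (exists Phi0 : (L -> R) -> R, linfty_dual_pos Phi0 /\ saddle_point f F x0 Phi0)
  <-> infsup_convex (add_obj F f x0).
Proof.
split.
- by move=> [Phi0 [h1 h2]]; exact: (dir1 hbd hfeas h1 h2).
- exact: (dir2 xi li hbd hfeas hopt hslater).
Qed.
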